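(* Let $c,g,e\in\mathbb{R}$, $h\in(0,1]$, $\tau>0$, and let $\theta^j=(\theta^j_i)_{i\in\mathbb{Z}}\in\ell^2(\mathbb{Z})$. Let $T^{j+1}$ be the operator on $\ell^2(\mathbb{Z})$ with matrix entries $$(T^{j+1})_{i,r}=\delta_{i,r}-\frac{c\tau}{2h}(\delta_{i+1,r}-\delta_{i-1,r})-\frac{g\tau}{2h}\Big[\theta^j_i(\delta_{i+1,r}-\delta_{i-1,r})+\delta_{i,r}(\theta^j_{i+1}-\theta^j_{i-1})\Big]-\frac{e\tau}{2h^3}\big[\delta_{i+2,r}-2\delta_{i+1,r}+2\delta_{i-1,r}-\delta_{i-2,r}\big],$$ i.e. the Jacobian $\partial\theta^{j+1}_i/\partial\theta^j_r$ of the one-step map of the scheme $$\frac{\theta^{j+1}_i-\theta^j_i}{\tau}+c\frac{\theta^j_{i+1}-\theta^j_{i-1}}{2h}+g\,\theta^j_i\frac{\theta^j_{i+1}-\theta^j_{i-1}}{2h}+e\frac{\theta^j_{i+2}-2\theta^j_{i+1}+2\theta^j_{i-1}-\theta^j_{i-2}}{2h^3}=0 .$$ Suppose $\tau\le K h^6$ for some constant $K$, and $\sup_i|\theta^j_i|\le B$, $\sup_i|\theta^j_{i+1}-\theta^j_i|/h\le B$. Then there is a constant $a$ depending only on $c,g,e,K,B$ (and not on $h,\tau$) such that the spectral norm satisfies $\|T^{j+1}\|\le e^{a\tau}$.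
   Context: $\delta_{i,r}$ is the Kronecker delta; the spectral norm is the operator norm on $\ell^2(\mathbb{Z})$. *)

(* Defs.v *)
From Stdlib Require Import Reals ZArith.
From Coquelicot Require Import Coquelicot.
Open Scope R_scope.

Definition kdelta (i r : Z) : R := if Z.eq_dec i r then 1 else 0.

Definition l2_partial (x : Z -> R) (N : nat) : R :=
  sum_f_R0 (fun k => (x (Z.of_nat k - Z.of_nat N)%Z) ^ 2) (2 * N).

Definition is_l2 (x : Z -> R) : Prop := ex_finite_lim_seq (l2_partial x).

Definition l2norm (x : Z -> R) : R := sqrt (real (Lim_seq (l2_partial x))).

(* ||A|| <= M for the operator norm on l^2(Z): A maps l^2 to l^2 and
   ||A x|| <= M ||x|| for every x in l^2 (definition of the operator norm
   as the least such M). *)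
Definition opnorm_le (A : (Z -> R) -> (Z -> R)) (M : R) : Prop :=
  forall x : Z -> R, is_l2 x -> is_l2 (A x) /\ l2norm (A x) <= M * l2norm x.

Definition Tmat (c g e h tau : R) (theta : Z -> R) (i r : Z) : R :=
  kdelta i r
  - c * tau / (2 * h) * (kdelta (i + 1) r - kdelta (i - 1) r)
  - g * tau / (2 * h) *
      (theta i * (kdelta (i + 1) r - kdelta (i - 1) r)
       + kdelta i r * (theta (i + 1)%Z - theta (i - 1)%Z))
  - e * tau / (2 * h ^ 3) *
      (kdelta (i + 2) r - 2 * kdelta (i + 1) r + 2 * kdelta (i - 1) r
       - kdelta (i - 2) r).

(* Action of the matrix on a sequence: (T x)_i = sum_r T_{i,r} x_r.
   Row i of Tmat vanishes outside r in [i-2, i+2], so the sum over Z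
   reduces to these five terms. *)
Definition Tapply (c g e h tau : R) (theta : Z -> R) (x : Z -> R) (i : Z) : R :=
  sum_f_R0 (fun k => Tmat c g e h tau theta i (i - 2 + Z.of_nat k)%Z
                     * x (i - 2 + Z.of_nat k)%Z) 4.

(* Main.v *)
Require Import Defs.
From Stdlib Require Import Reals ZArith.
From Coquelicot Require Import Coquelicot.
From Stdlib Require Import Lra Lia Psatz.
Open Scope R_scope.

Fixpoint sZ (f : Z -> R) (a : Z) (n : nat) : R :=
  match n with O => 0 | S n => f a + sZ f (a + 1)%Z n end.

Lemma sZ_ext f g a n :
  (forall i, (a <= i < a + Z.of_nat n)%Z -> f i = g i) -> sZ f a n = sZ g a n.
Proof.
  revert a; induction n as [|n IH]; intros a H; simpl; [reflexivity|].
  rewrite (H a) by lia. rewrite (IH (a+1)%Z); [reflexivity|].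
  intros i Hi; apply H; lia.
Qed.

Lemma sZ_le f g a n :
  (forall i, (a <= i < a + Z.of_nat n)%Z -> f i <= g i) -> sZ f a n <= sZ g a n.
Proof.
  revert a; induction n as [|n IH]; intros a H; simpl; [lra|].
  assert (f a <= g a) by (apply H; lia).
  assert (sZ f (a+1) n <= sZ g (a+1) n) by (apply IH; intros i Hi; apply H; lia).
  lra.
Qed.

Lemma sZ_plus f g a n : sZ (fun i => f i + g i) a n = sZ f a n + sZ g a n.
Proof. revert a; induction n; intros a; simpl; [lra|]. rewrite IHn; lra. Qed.

Lemma sZ_minus f g a n : sZ (fun i => f i - g i) a n = sZ f a n - sZ g a n.
Proof. revert a; induction n; intros a; simpl; [lra|]. rewrite IHn; lra. Qed.

Lemma sZ_scal k f a n : sZ (fun i => k * f i) a n = k * sZ f a n.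
Proof. revert a; induction n; intros a; simpl; [lra|]. rewrite IHn; lra. Qed.

Lemma sZ_zero f a n :
  (forall i, (a <= i < a + Z.of_nat n)%Z -> f i = 0) -> sZ f a n = 0.
Proof.
  intros H. transitivity (sZ (fun _ => 0) a n).
  - apply sZ_ext; auto.
  - clear H; revert a; induction n; intros a; simpl; [lra|]. rewrite IHn; lra.
Qed.

Lemma sZ_nonneg f a n : (forall i, 0 <= f i) -> 0 <= sZ f a n.
Proof. intros H; revert a; induction n; intros a; simpl; [lra|]. specialize (IHn (a+1)%Z); specialize (H a); lra. Qed.

Lemma sZ_split f a m n : sZ f a (m + n) = sZ f a m + sZ f (a + Z.of_nat m) n.
Proof.
  revert a; induction m; intros a; simpl.
  - replace (a + 0)%Z with a by lia; lra.
  - rewrite IHm. replace (a + 1 + Z.of_nat m)%Z with (a + Z.pos (Pos.of_succ_nat m))%Z by lia. lra.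
Qed.

Lemma sZ_shift f a n k : sZ (fun i => f (i + k)%Z) a n = sZ f (a + k) n.
Proof.
  revert a; induction n; intros a; simpl; [reflexivity|].
  rewrite IHn. replace (a + 1 + k)%Z with (a + k + 1)%Z by lia. reflexivity.
Qed.

Lemma sZ_tele p a n :
  sZ (fun i => p i - p (i - 1)%Z) a n = p (a + Z.of_nat n - 1)%Z - p (a - 1)%Z.
Proof.
  revert a; induction n; intros a; simpl.
  - replace (a + 0 - 1)%Z with (a - 1)%Z by lia; lra.
  - rewrite IHn. replace (a + 1 - 1)%Z with a by lia.
    replace (a + 1 + Z.of_nat n - 1)%Z with (a + Z.pos (Pos.of_succ_nat n) - 1)%Z by lia. lra.
Qed.

Lemma sZ_supp f a n lo m :
  (forall i, (i < lo \/ lo + Z.of_nat m <= i)%Z -> f i = 0) ->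
  (a <= lo)%Z -> (lo + Z.of_nat m <= a + Z.of_nat n)%Z ->
  sZ f a n = sZ f lo m.
Proof.
  intros H H1 H2.
  set (p := Z.to_nat (lo - a)).
  set (q := (n - p - m)%nat).
  assert (Hn : n = (p + m + q)%nat) by (unfold q, p; lia).
  rewrite Hn, !sZ_split.
  replace (a + Z.of_nat (p + m))%Z with (lo + Z.of_nat m)%Z by (unfold p; lia).
  replace (a + Z.of_nat p)%Z with lo by (unfold p; lia).
  rewrite (sZ_zero f a p), (sZ_zero f (lo + Z.of_nat m) q).
  - lra.
  - intros i Hi; apply H; lia.
  - intros i Hi; apply H; unfold p in Hi; lia.
Qed.

Lemma sZ_sub_le f a n lo m :
  (forall i, 0 <= f i) ->
  (a <= lo)%Z -> (lo + Z.of_nat m <= a + Z.of_nat n)%Z ->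
  sZ f lo m <= sZ f a n.
Proof.
  intros H H1 H2.
  set (p := Z.to_nat (lo - a)).
  set (q := (n - p - m)%nat).
  assert (Hn : n = (p + m + q)%nat) by (unfold q, p; lia).
  rewrite Hn, !sZ_split.
  replace (a + Z.of_nat (p + m))%Z with (lo + Z.of_nat m)%Z by (unfold p; lia).
  replace (a + Z.of_nat p)%Z with lo by (unfold p; lia).
  pose proof (sZ_nonneg f a p H). pose proof (sZ_nonneg f (lo + Z.of_nat m) q H). lra.
Qed.

Lemma sum_sZ f a n : sum_f_R0 (fun k => f (a + Z.of_nat k)%Z) n = sZ f a (S n).
Proof.
  induction n.
  - simpl. replace (a + 0)%Z with a by lia. lra.
  - simpl sum_f_R0. rewrite IHn. replace (S (S n)) with (S n + 1)%nat by lia.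
    rewrite sZ_split. simpl. lra.
Qed.

Lemma l2_partial_sZ x N :
  l2_partial x N = sZ (fun i => x i ^ 2) (- Z.of_nat N)%Z (S (2 * N)).
Proof.
  unfold l2_partial. rewrite <- sum_sZ. apply sum_eq. intros k _.
  replace (- Z.of_nat N + Z.of_nat k)%Z with (Z.of_nat k - Z.of_nat N)%Z by lia. reflexivity.
Qed.

Lemma kd_eq a b : a = b -> kdelta a b = 1.
Proof. intros ->; unfold kdelta; destruct Z.eq_dec; congruence. Qed.
Lemma kd_neq a b : a <> b -> kdelta a b = 0.
Proof. intros H; unfold kdelta; destruct Z.eq_dec; congruence. Qed.

Definition Yv (c g e h : R) (th x : Z -> R) (i : Z) : R :=
  - c / (2 * h) * (x (i+1)%Z - x (i-1)%Z)
  - g / (2 * h) * (th i * (x (i+1)%Z - x (i-1)%Z) + x i * (th (i+1)%Z - th (i-1)%Z))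
  - e / (2 * h ^ 3) * (x (i+2)%Z - 2 * x (i+1)%Z + 2 * x (i-1)%Z - x (i-2)%Z).

Lemma Tapply_eq c g e h tau th x i :
  Tapply c g e h tau th x i = x i + tau * Yv c g e h th x i.
Proof.
  unfold Tapply, Tmat, Yv. simpl sum_f_R0.
  replace (i - 2 + 0)%Z with (i-2)%Z by lia.
  replace (i - 2 + 1)%Z with (i-1)%Z by lia.
  replace (i - 2 + 2)%Z with i by lia.
  replace (i - 2 + 3)%Z with (i+1)%Z by lia.
  replace (i - 2 + 4)%Z with (i+2)%Z by lia.
  repeat match goal with |- context [kdelta ?a ?b] =>
    first [rewrite (kd_eq a b) by lia | rewrite (kd_neq a b) by lia] end.
  change (h*(h*(h*1))) with (h^3). unfold Rdiv. ring.
Qed.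

Definition supp (x : Z -> R) (M : nat) :=
  forall i, (i < - Z.of_nat M \/ Z.of_nat M < i)%Z -> x i = 0.

Definition Wa (M : nat) : Z := (- Z.of_nat M - 2)%Z.
Definition Wn (M : nat) : nat := (2 * M + 5)%nat.
Definition SS (f : Z -> R) (M : nat) := sZ f (- Z.of_nat M)%Z (2 * M + 1).

Lemma shifted_sum f M k :
  supp f M -> (-2 <= k <= 2)%Z ->
  sZ (fun i => f (i + k)%Z) (Wa M) (Wn M) = SS f M.
Proof.
  intros Hs Hk. rewrite sZ_shift. unfold SS, Wa, Wn.
  apply sZ_supp.
  - intros i Hi; apply Hs; lia.
  - lia.
  - lia.
Qed.

Lemma supp_sq x M : supp x M -> supp (fun i => x i ^ 2) M.
Proof. intros H i Hi. rewrite (H i Hi). ring. Qed.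

Lemma sZ_tele3 A B C p1 p2 p3 R a n :
  sZ (fun i => A * (p1 i - p1 (i-1)%Z) + B * (p2 i - p2 (i-1)%Z)
               + C * (p3 i - p3 (i-1)%Z) + R i) a n =
  A * (p1 (a + Z.of_nat n - 1)%Z - p1 (a-1)%Z)
  + B * (p2 (a + Z.of_nat n - 1)%Z - p2 (a-1)%Z)
  + C * (p3 (a + Z.of_nat n - 1)%Z - p3 (a-1)%Z) + sZ R a n.
Proof.
  rewrite !sZ_plus.
  rewrite (sZ_scal A (fun i => p1 i - p1 (i-1)%Z)).
  rewrite (sZ_scal B (fun i => p2 i - p2 (i-1)%Z)).
  rewrite (sZ_scal C (fun i => p3 i - p3 (i-1)%Z)).
  rewrite !sZ_tele. reflexivity.
Qed.

Lemma abs_bound_mul s z S : Rabs s <= S -> s * z <= S * Rabs z.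
Proof.
  intros H. apply Rle_trans with (Rabs (s * z)); [apply Rle_abs|].
  rewrite Rabs_mult. apply Rmult_le_compat_r; [apply Rabs_pos|exact H].
Qed.

Lemma abs_prod_le a b : Rabs (a * b) <= (a ^ 2 + b ^ 2) / 2.
Proof.
  rewrite Rabs_mult.
  assert (a ^ 2 = Rabs a ^ 2) by (unfold Rabs; destruct Rcase_abs; ring).
  assert (b ^ 2 = Rabs b ^ 2) by (unfold Rabs; destruct Rcase_abs; ring).
  rewrite H, H0. generalize (Rabs a) (Rabs b); intros r r0; pose proof (pow2_ge_0 (r - r0)); simpl in *; nra.
Qed.

Lemma th_diff (h B : R) (th : Z -> R) :
  0 < h -> (forall i, Rabs (th (i + 1)%Z - th i) / h <= B) ->
  forall i j, j = (i + 1)%Z -> Rabs (th j - th i) <= B * h.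
Proof.
  intros Hh H i j ->. specialize (H i).
  apply Rmult_le_compat_r with (r := h) in H; [|lra].
  unfold Rdiv in H. rewrite Rmult_assoc, Rinv_l in H; lra.
Qed.

Lemma coef_bound g h d D : 0 < h -> Rabs d <= D ->
  Rabs (- g / (2 * h) * d) <= Rabs g * D / (2 * h).
Proof.
  intros Hh Hd. rewrite Rabs_mult. unfold Rdiv.
  rewrite Rabs_mult, Rabs_Ropp, Rabs_inv, (Rabs_right (2*h)) by lra.
  replace (Rabs g * D * / (2 * h)) with (Rabs g * / (2 * h) * D) by ring.
  apply Rmult_le_compat_l; [|exact Hd].
  apply Rmult_le_pos; [apply Rabs_pos|left; apply Rinv_0_lt_compat; lra].
Qed.

Definition qf (x : Z -> R) i := x i * x (i+1)%Z.
Definition wf (th x : Z -> R) i := th i * x i * x (i+1)%Z.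
Definition uf (x : Z -> R) i := x i * x (i+2)%Z + x (i-1)%Z * x (i+1)%Z - 2 * x i * x (i+1)%Z.
Definition Rf g h (th x : Z -> R) i :=
  - g / (2 * h) * ((th (i-1)%Z - th i) * (x (i-1)%Z * x i))
  + - g / (2 * h) * (th (i+1)%Z - th (i-1)%Z) * x i ^ 2.

Lemma cross_pw c g e h th x i :
  x i * Yv c g e h th x i =
  (- c / (2*h)) * (qf x i - qf x (i-1)%Z) + (- g / (2*h)) * (wf th x i - wf th x (i-1)%Z)
  + (- e / (2*h^3)) * (uf x i - uf x (i-1)%Z) + Rf g h th x i.
Proof.
  unfold Yv, qf, wf, uf, Rf.
  replace (i - 1 + 1)%Z with i by lia.
  replace (i - 1 + 2)%Z with (i + 1)%Z by lia.
  replace (i - 1 - 1)%Z with (i - 2)%Z by lia.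
  unfold Rdiv. ring.
Qed.

Lemma Rf_bound g h B th x i :
  0 < h -> 0 <= B -> (forall i, Rabs (th (i + 1)%Z - th i) / h <= B) ->
  Rf g h th x i <= Rabs g * B / 4 * x (i-1)%Z ^ 2 + 5 * Rabs g * B / 4 * x i ^ 2.
Proof.
  intros Hh HB Hd. unfold Rf.
  assert (H1 : Rabs (th (i-1)%Z - th i) <= B * h).
  { rewrite Rabs_minus_sym. apply (th_diff h B th Hh Hd (i-1)%Z i). lia. }
  assert (H2 : Rabs (th (i+1)%Z - th (i-1)%Z) <= 2 * (B * h)).
  { replace (th (i+1)%Z - th (i-1)%Z) with ((th (i+1)%Z - th i) + (th i - th (i-1)%Z)) by ring.
    eapply Rle_trans; [apply Rabs_triang|].
    pose proof (th_diff h B th Hh Hd i (i+1)%Z eq_refl).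
    pose proof (th_diff h B th Hh Hd (i-1)%Z i ltac:(lia)). lra. }
  pose proof (coef_bound g h _ _ Hh H1) as K1.
  pose proof (coef_bound g h _ _ Hh H2) as K2.
  replace (Rabs g * (B * h) / (2 * h)) with (Rabs g * B / 2) in K1 by (field; lra).
  replace (Rabs g * (2 * (B * h)) / (2 * h)) with (Rabs g * B) in K2 by (field; lra).
  pose proof (abs_bound_mul _ (x (i-1)%Z * x i) _ K1) as L1.
  pose proof (abs_bound_mul _ (x i ^ 2) _ K2) as L2.
  rewrite (Rabs_right (x i ^ 2)) in L2 by (apply Rle_ge, pow2_ge_0).
  pose proof (abs_prod_le (x (i-1)%Z) (x i)) as P.
  assert (0 <= Rabs g * B) by (apply Rmult_le_pos; [apply Rabs_pos|lra]).
  assert (Rabs g * B / 2 * Rabs (x (i - 1)%Z * x i) <=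
          Rabs g * B / 2 * ((x (i - 1)%Z ^ 2 + x i ^ 2) / 2))
    by (apply Rmult_le_compat_l; lra).
  lra.
Qed.

Ltac kill_x Hs :=
  repeat match goal with |- context [?x ?j] =>
    rewrite (Hs j) by (unfold Wa, Wn; lia) end.

Lemma sq_shift_sum x M k :
  supp x M -> (-2 <= k <= 2)%Z ->
  sZ (fun i => x (i + k)%Z ^ 2) (Wa M) (Wn M) = SS (fun i => x i ^ 2) M.
Proof.
  intros Hs Hk. apply (shifted_sum (fun i => x i ^ 2) M k (supp_sq x M Hs) Hk).
Qed.

Lemma cross_bound c g e h B th x M :
  0 < h -> 0 <= B -> (forall i, Rabs (th (i + 1)%Z - th i) / h <= B) -> supp x M ->
  sZ (fun i => x i * Yv c g e h th x i) (Wa M) (Wn M)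
  <= 3 / 2 * Rabs g * B * SS (fun i => x i ^ 2) M.
Proof.
  intros Hh HB Hd Hs.
  rewrite (sZ_ext _ (fun i => (- c / (2*h)) * (qf x i - qf x (i-1)%Z)
     + (- g / (2*h)) * (wf th x i - wf th x (i-1)%Z)
     + (- e / (2*h^3)) * (uf x i - uf x (i-1)%Z) + Rf g h th x i))
    by (intros; apply cross_pw).
  rewrite sZ_tele3.
  assert (E: (Wa M + Z.of_nat (Wn M) - 1 = Z.of_nat M + 2)%Z) by (unfold Wa, Wn; lia).
  rewrite E.
  unfold qf, wf, uf.
  assert (Hs' : forall i, (i < - Z.of_nat M \/ Z.of_nat M < i)%Z -> x i = 0) by exact Hs.
  repeat match goal with |- context [x ?j] =>
    rewrite (Hs' j) by (unfold Wa; lia) end.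
  apply Rle_trans with (sZ (fun i => Rabs g * B / 4 * x (i-1)%Z ^ 2 + 5 * Rabs g * B / 4 * x i ^ 2) (Wa M) (Wn M)).
  - match goal with |- ?l <= _ => assert (l = sZ (Rf g h th x) (Wa M) (Wn M)) as -> by ring end.
    apply sZ_le. intros i _. apply Rf_bound; auto.
  - rewrite sZ_plus.
    rewrite (sZ_scal (Rabs g * B / 4) (fun i => x (i-1)%Z ^ 2)).
    rewrite (sZ_scal (5 * Rabs g * B / 4) (fun i => x i ^ 2)).
    replace (sZ (fun i => x (i-1)%Z ^2) (Wa M) (Wn M)) with (sZ (fun i => x (i + -1)%Z ^2) (Wa M) (Wn M)) by reflexivity.
    rewrite (sZ_ext (fun i => x i ^ 2) (fun i => x (i + 0)%Z ^ 2)) by (intros; rewrite Z.add_0_r; reflexivity).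
    rewrite (sq_shift_sum x M (-1) Hs) by lia.
    rewrite (sq_shift_sum x M 0 Hs) by lia.
    right. field.
Qed.

Lemma abs_both a : a <= Rabs a /\ - a <= Rabs a.
Proof. split; [apply Rle_abs|]. rewrite <- Rabs_Ropp. apply Rle_abs. Qed.

Lemma sq_le_of_abs a Q : Rabs a <= Q -> a ^ 2 <= Q ^ 2.
Proof.
  intros H. pose proof (abs_both a). pose proof (Rabs_pos a).
  simpl. nra.
Qed.

Lemma Ysq_pw c g e h B th x i :
  0 < h -> h <= 1 -> (forall i, Rabs (th i) <= B) ->
  (forall i, Rabs (th (i + 1)%Z - th i) / h <= B) ->
  (Yv c g e h th x i) ^ 2 <=
  6 * ((Rabs c + Rabs g * B + Rabs e) * (/ h) ^ 3) ^ 2 *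
  (x (i-2)%Z ^ 2 + x (i-1)%Z ^ 2 + x i ^ 2 + x (i+1)%Z ^ 2 + x (i+2)%Z ^ 2).
Proof.
  intros Hh Hh1 Hb Hd.
  assert (HB : 0 <= B) by (pose proof (Hb 0%Z); pose proof (Rabs_pos (th 0%Z)); lra).
  set (u := / h).
  assert (Hu1 : 1 <= u).
  { unfold u. rewrite <- Rinv_1. apply Rinv_le_contravar; lra. }
  assert (Hhu : h * u = 1) by (unfold u; field; lra).
  set (v := u ^ 3).
  assert (Huv : u <= v) by (unfold v; simpl; nra).
  set (gt := g * th i).
  set (d := th (i+1)%Z - th (i-1)%Z).
  set (a1 := - (c * u) / 2 - gt * u / 2 + e * v).
  set (a2 := - (e * v) / 2).
  set (a0 := - (g * d) * u / 2).
  assert (HY : Yv c g e h th x i =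
     a1 * (x (i+1)%Z - x (i-1)%Z) + a2 * (x (i+2)%Z - x (i-2)%Z) + a0 * x i).
  { unfold a1, a2, a0, gt, d, v, u, Yv. field. lra. }
  set (C0 := Rabs c + Rabs g * B + Rabs e).
  change ((Rabs c + Rabs g * B + Rabs e) * (/ h) ^ 3) with (C0 * v).
  assert (Hgt : Rabs gt <= Rabs g * B).
  { unfold gt. rewrite Rabs_mult. apply Rmult_le_compat_l; [apply Rabs_pos|apply Hb]. }
  assert (Hdd : Rabs d <= 2 * (B * h)).
  { unfold d. replace (th (i+1)%Z - th (i-1)%Z) with ((th (i+1)%Z - th i) + (th i - th (i-1)%Z)) by ring.
    eapply Rle_trans; [apply Rabs_triang|].
    pose proof (th_diff h B th Hh Hd i (i+1)%Z eq_refl).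
    pose proof (th_diff h B th Hh Hd (i-1)%Z i ltac:(lia)). lra. }
  assert (Hgd : Rabs (g * d) <= Rabs g * (2 * (B * h))).
  { rewrite Rabs_mult. apply Rmult_le_compat_l; [apply Rabs_pos|exact Hdd]. }
  pose proof (abs_both c). pose proof (abs_both e). pose proof (abs_both gt).
  pose proof (abs_both (g * d)).
  pose proof (Rabs_pos c). pose proof (Rabs_pos e). pose proof (Rabs_pos g).
  assert (HgB : 0 <= Rabs g * B) by (apply Rmult_le_pos; lra).
  assert (Hv0 : 0 <= v) by lra.
  assert (A1 : Rabs a1 <= C0 * v).
  { apply Rabs_le. unfold a1, C0.
    assert (0 <= (Rabs c - c) * u) by (apply Rmult_le_pos; lra).
    assert (0 <= (Rabs c + c) * u) by (apply Rmult_le_pos; lra).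
    assert (0 <= (Rabs g * B - gt) * u) by (apply Rmult_le_pos; lra).
    assert (0 <= (Rabs g * B + gt) * u) by (apply Rmult_le_pos; lra).
    assert (0 <= (Rabs e - e) * v) by (apply Rmult_le_pos; lra).
    assert (0 <= (Rabs e + e) * v) by (apply Rmult_le_pos; lra).
    assert (0 <= Rabs c * (v - u)) by (apply Rmult_le_pos; lra).
    assert (0 <= Rabs g * B * (v - u)) by (apply Rmult_le_pos; lra).
    assert (0 <= Rabs g * B * v) by (apply Rmult_le_pos; lra).
    assert (0 <= Rabs c * v) by (apply Rmult_le_pos; lra).
    assert (0 <= Rabs e * v) by (apply Rmult_le_pos; lra).
    split; nra. }
  assert (A2 : Rabs a2 <= C0 * v).
  { apply Rabs_le. unfold a2, C0.
    assert (0 <= (Rabs e - e) * v) by (apply Rmult_le_pos; lra).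
    assert (0 <= (Rabs e + e) * v) by (apply Rmult_le_pos; lra).
    assert (0 <= Rabs g * B * v) by (apply Rmult_le_pos; lra).
    assert (0 <= Rabs c * v) by (apply Rmult_le_pos; lra).
    assert (0 <= Rabs e * v) by (apply Rmult_le_pos; lra).
    split; nra. }
  assert (A0 : Rabs a0 <= C0 * v).
  { apply Rabs_le. unfold a0, C0.
    assert (0 <= (Rabs g * (2 * (B * h)) - g * d) * u) by (apply Rmult_le_pos; lra).
    assert (0 <= (Rabs g * (2 * (B * h)) + g * d) * u) by (apply Rmult_le_pos; lra).
    assert (Rabs g * (2 * (B * h)) * u = 2 * (Rabs g * B)) by (replace (Rabs g * (2 * (B * h)) * u) with (2 * (Rabs g * B) * (h * u)) by ring; rewrite Hhu; ring).
    assert (0 <= Rabs g * B * (v - 1)) by (apply Rmult_le_pos; lra).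
    assert (0 <= Rabs c * v) by (apply Rmult_le_pos; lra).
    assert (0 <= Rabs e * v) by (apply Rmult_le_pos; lra).
    split; nra. }
  set (Q := C0 * v). fold Q in A1, A2, A0.
  rewrite HY.
  set (p := x (i+1)%Z - x (i-1)%Z). set (q := x (i+2)%Z - x (i-2)%Z).
  pose proof (sq_le_of_abs _ _ A1) as S1.
  pose proof (sq_le_of_abs _ _ A2) as S2.
  pose proof (sq_le_of_abs _ _ A0) as S0.
  assert (T1 : (a1 * p) ^ 2 <= Q ^ 2 * p ^ 2)
    by (rewrite Rpow_mult_distr; apply Rmult_le_compat_r; [apply pow2_ge_0|exact S1]).
  assert (T2 : (a2 * q) ^ 2 <= Q ^ 2 * q ^ 2)
    by (rewrite Rpow_mult_distr; apply Rmult_le_compat_r; [apply pow2_ge_0|exact S2]).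
  assert (T0 : (a0 * x i) ^ 2 <= Q ^ 2 * x i ^ 2)
    by (rewrite Rpow_mult_distr; apply Rmult_le_compat_r; [apply pow2_ge_0|exact S0]).
  assert (P1 : p ^ 2 <= 2 * x (i+1)%Z ^ 2 + 2 * x (i-1)%Z ^ 2).
  { unfold p. pose proof (pow2_ge_0 (x (i+1)%Z + x (i-1)%Z)). simpl in *. nra. }
  assert (P2 : q ^ 2 <= 2 * x (i+2)%Z ^ 2 + 2 * x (i-2)%Z ^ 2).
  { unfold q. pose proof (pow2_ge_0 (x (i+2)%Z + x (i-2)%Z)). simpl in *. nra. }
  assert (SQ : (a1 * p + a2 * q + a0 * x i) ^ 2 <= 3 * ((a1 * p) ^ 2 + (a2 * q) ^ 2 + (a0 * x i) ^ 2)).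
  { generalize (a1 * p) (a2 * q) (a0 * x i). intros r1 r2 r3.
    pose proof (pow2_ge_0 (r1 - r2)). pose proof (pow2_ge_0 (r2 - r3)). pose proof (pow2_ge_0 (r1 - r3)).
    simpl in *. nra. }
  assert (QQ : 0 <= Q ^ 2) by apply pow2_ge_0.
  assert (Q ^ 2 * p ^ 2 <= Q ^ 2 * (2 * x (i+1)%Z ^ 2 + 2 * x (i-1)%Z ^ 2))
    by (apply Rmult_le_compat_l; lra).
  assert (Q ^ 2 * q ^ 2 <= Q ^ 2 * (2 * x (i+2)%Z ^ 2 + 2 * x (i-2)%Z ^ 2))
    by (apply Rmult_le_compat_l; lra).
  assert (Q ^ 2 * x i ^ 2 <= Q ^ 2 * (2 * x i ^ 2))
    by (apply Rmult_le_compat_l; pose proof (pow2_ge_0 (x i)); lra).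
  apply Rle_trans with (3 * (Q ^ 2 * (2 * x (i+1)%Z ^ 2 + 2 * x (i-1)%Z ^ 2)
                            + Q ^ 2 * (2 * x (i+2)%Z ^ 2 + 2 * x (i-2)%Z ^ 2)
                            + Q ^ 2 * (2 * x i ^ 2))); [lra|].
  right. ring.
Qed.

Lemma Ysq_sum c g e h B th x M :
  0 < h -> h <= 1 -> (forall i, Rabs (th i) <= B) ->
  (forall i, Rabs (th (i + 1)%Z - th i) / h <= B) -> supp x M ->
  sZ (fun i => (Yv c g e h th x i) ^ 2) (Wa M) (Wn M) <=
  30 * ((Rabs c + Rabs g * B + Rabs e) * (/ h) ^ 3) ^ 2 * SS (fun i => x i ^ 2) M.
Proof.
  intros Hh Hh1 Hb Hd Hs.
  set (Q := (Rabs c + Rabs g * B + Rabs e) * (/ h) ^ 3).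
  eapply Rle_trans; [apply sZ_le; intros i _; apply (Ysq_pw c g e h B th x i Hh Hh1 Hb Hd)|].
  fold Q. rewrite sZ_scal, !sZ_plus.
  replace (sZ (fun i => x (i-2)%Z ^2) (Wa M) (Wn M)) with (sZ (fun i => x (i + -2)%Z ^2) (Wa M) (Wn M)) by reflexivity.
  replace (sZ (fun i => x (i-1)%Z ^2) (Wa M) (Wn M)) with (sZ (fun i => x (i + -1)%Z ^2) (Wa M) (Wn M)) by reflexivity.
  rewrite (sZ_ext (fun i => x i ^ 2) (fun i => x (i + 0)%Z ^ 2)) by (intros; rewrite Z.add_0_r; reflexivity).
  rewrite !sq_shift_sum by (auto; lia).
  right. ring.
Qed.

Lemma core c g e K B h tau th x M :
  0 < h -> h <= 1 -> 0 < tau -> tau <= K * h ^ 6 ->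
  (forall i, Rabs (th i) <= B) ->
  (forall i, Rabs (th (i + 1)%Z - th i) / h <= B) -> supp x M ->
  sZ (fun i => (Tapply c g e h tau th x i) ^ 2) (Wa M) (Wn M) <=
  (1 + tau * (3 * Rabs g * B + 30 * (Rabs c + Rabs g * B + Rabs e) ^ 2 * K))
   * SS (fun i => x i ^ 2) M.
Proof.
  intros Hh Hh1 Ht HK Hb Hd Hs.
  assert (HB : 0 <= B) by (pose proof (Hb 0%Z); pose proof (Rabs_pos (th 0%Z)); lra).
  rewrite (sZ_ext _ (fun i => x i ^ 2 + 2 * tau * (x i * Yv c g e h th x i)
                              + tau ^ 2 * (Yv c g e h th x i) ^ 2))
    by (intros i _; rewrite Tapply_eq; ring).
  rewrite !sZ_plus.
  rewrite (sZ_scal (2 * tau) (fun i => x i * Yv c g e h th x i)).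
  rewrite (sZ_scal (tau ^ 2) (fun i => Yv c g e h th x i ^ 2)).
  rewrite (sZ_ext (fun i => x i ^ 2) (fun i => x (i + 0)%Z ^ 2)) by (intros; rewrite Z.add_0_r; reflexivity).
  rewrite sq_shift_sum by (auto; lia).
  pose proof (cross_bound c g e h B th x M Hh HB Hd Hs) as Cr.
  pose proof (Ysq_sum c g e h B th x M Hh Hh1 Hb Hd Hs) as Ys.
  set (S := SS (fun i => x i ^ 2) M) in *.
  assert (HS : 0 <= S) by (apply sZ_nonneg; intros; apply pow2_ge_0).
  set (C0 := Rabs c + Rabs g * B + Rabs e) in *.
  set (u := / h) in *.
  assert (Hhu : h * u = 1) by (unfold u; field; lra).
  assert (Htu : tau * u ^ 6 <= K).
  { replace K with (K * (h * u) ^ 6) by (rewrite Hhu; ring).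
    rewrite Rpow_mult_distr. rewrite <- Rmult_assoc.
    apply Rmult_le_compat_r; [apply pow_le; unfold u; left; apply Rinv_0_lt_compat; lra|exact HK]. }
  assert (E : tau ^ 2 * (30 * (C0 * u ^ 3) ^ 2 * S) = tau * (30 * C0 ^ 2 * S) * (tau * u ^ 6)) by ring.
  assert (P : 0 <= tau * (30 * C0 ^ 2 * S)).
  { apply Rmult_le_pos; [lra|]. apply Rmult_le_pos; [|exact HS]. pose proof (pow2_ge_0 C0); lra. }
  assert (tau * (30 * C0 ^ 2 * S) * (tau * u ^ 6) <= tau * (30 * C0 ^ 2 * S) * K)
    by (apply Rmult_le_compat_l; assumption).
  assert (tau ^ 2 * sZ (fun i => Yv c g e h th x i ^ 2) (Wa M) (Wn M) <= tau ^ 2 * (30 * (C0 * u ^ 3) ^ 2 * S))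
    by (apply Rmult_le_compat_l; [apply pow2_ge_0|exact Ys]).
  assert (2 * tau * sZ (fun i => x i * Yv c g e h th x i) (Wa M) (Wn M) <= 2 * tau * (3 / 2 * Rabs g * B * S))
    by (apply Rmult_le_compat_l; lra).
  assert (RHS : (1 + tau * (3 * Rabs g * B + 30 * C0 ^ 2 * K)) * S =
                S + 2 * tau * (3 / 2 * Rabs g * B * S) + tau * (30 * C0 ^ 2 * S) * K) by field.
  rewrite RHS. lra.
Qed.

Lemma l2_incr y N : l2_partial y N <= l2_partial y (S N).
Proof.
  rewrite !l2_partial_sZ. apply sZ_sub_le; [intros; apply pow2_ge_0|lia|lia].
Qed.

Lemma incr_mono (u : nat -> R) : (forall n, u n <= u (S n)) -> forall n m, (n <= m)%nat -> u n <= u m.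
Proof.
  intros H n m Hnm. induction Hnm; [lra|]. specialize (H m). lra.
Qed.

Lemma incr_le_lim (u : nat -> R) (l : R) :
  (forall n, u n <= u (S n)) -> is_lim_seq u l -> forall n, u n <= l.
Proof.
  intros H Hl n.
  assert (Rbar_le (u n) l).
  { apply (is_lim_seq_le_loc (fun _ => u n) u).
    - exists n. intros m Hm. apply incr_mono; auto.
    - apply is_lim_seq_const.
    - exact Hl. }
  simpl in H0. exact H0.
Qed.

Definition trunc (x : Z -> R) (M : nat) (i : Z) : R :=
  if (Z.leb (- Z.of_nat M) i && Z.leb i (Z.of_nat M))%bool then x i else 0.

Lemma trunc_supp x M : supp (trunc x M) M.
Proof.
  intros i Hi. unfold trunc.
  destruct (Z.leb_spec (- Z.of_nat M) i); destruct (Z.leb_spec i (Z.of_nat M)); simpl; try reflexivity; lia.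
Qed.

Lemma trunc_eq x M i : (- Z.of_nat M <= i <= Z.of_nat M)%Z -> trunc x M i = x i.
Proof.
  intros Hi. unfold trunc.
  destruct (Z.leb_spec (- Z.of_nat M) i); destruct (Z.leb_spec i (Z.of_nat M)); simpl; try reflexivity; lia.
Qed.

Lemma key_bound c g e K B h tau th x (L : R) N :
  0 < h -> h <= 1 -> 0 < tau -> tau <= K * h ^ 6 ->
  (forall i, Rabs (th i) <= B) ->
  (forall i, Rabs (th (i + 1)%Z - th i) / h <= B) ->
  is_lim_seq (l2_partial x) L ->
  0 <= 1 + tau * (3 * Rabs g * B + 30 * (Rabs c + Rabs g * B + Rabs e) ^ 2 * K) ->
  l2_partial (Tapply c g e h tau th x) N <=
  (1 + tau * (3 * Rabs g * B + 30 * (Rabs c + Rabs g * B + Rabs e) ^ 2 * K)) * L.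
Proof.
  intros Hh Hh1 Ht HK Hb Hd HL Hpos.
  set (M := (N + 2)%nat).
  set (xt := trunc x M).
  rewrite l2_partial_sZ.
  rewrite (sZ_ext _ (fun i => Tapply c g e h tau th xt i ^ 2)).
  2:{ intros i Hi. rewrite !Tapply_eq. unfold Yv, xt.
      rewrite !trunc_eq by (unfold M; lia). reflexivity. }
  eapply Rle_trans.
  { apply (sZ_sub_le _ (Wa M) (Wn M)); [intros; apply pow2_ge_0|unfold Wa, M; lia|unfold Wa, Wn, M; lia]. }
  eapply Rle_trans; [apply (core c g e K B h tau th xt M); auto; apply trunc_supp|].
  apply Rmult_le_compat_l; [exact Hpos|].
  unfold SS. rewrite (sZ_ext _ (fun i => x i ^ 2)).
  2:{ intros i Hi. unfold xt. rewrite trunc_eq by lia. reflexivity. }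
  replace (2 * M + 1)%nat with (S (2 * M)) by lia.
  rewrite <- l2_partial_sZ.
  apply (incr_le_lim _ L (l2_incr x) HL).
Qed.

Theorem mainTheorem3 :
  forall c g e K B : R,
  exists a : R,
  forall (h tau : R) (theta : Z -> R),
    0 < h -> h <= 1 -> 0 < tau -> tau <= K * h ^ 6 ->
    is_l2 theta ->
    (forall i : Z, Rabs (theta i) <= B) ->
    (forall i : Z, Rabs (theta (i + 1)%Z - theta i) / h <= B) ->
    opnorm_le (Tapply c g e h tau theta) (exp (a * tau)).
Proof.
  intros c g e K B.
  exists ((3 * Rabs g * Rabs B + 30 * (Rabs c + Rabs g * Rabs B + Rabs e) ^ 2 * Rabs K) / 2).
  intros h tau th Hh Hh1 Ht HK _ Hb Hd x Hx.
  assert (HB : 0 <= B) by (pose proof (Hb 0%Z); pose proof (Rabs_pos (th 0%Z)); lra).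
  assert (HKp : 0 < K).
  { destruct (Rle_or_lt K 0) as [H|H]; [|exact H].
    assert (0 < h ^ 6) by (apply pow_lt; lra). nra. }
  rewrite (Rabs_right B) by lra. rewrite (Rabs_right K) by lra.
  set (A := 3 * Rabs g * B + 30 * (Rabs c + Rabs g * B + Rabs e) ^ 2 * K).
  assert (HA : 0 <= A).
  { unfold A. pose proof (Rabs_pos g). pose proof (pow2_ge_0 (Rabs c + Rabs g * B + Rabs e)).
    assert (0 <= Rabs g * B) by (apply Rmult_le_pos; lra).
    assert (0 <= (Rabs c + Rabs g * B + Rabs e) ^ 2 * K) by (apply Rmult_le_pos; lra). lra. }
  assert (Hpos : 0 <= 1 + tau * A) by (assert (0 <= tau * A) by (apply Rmult_le_pos; lra); lra).
  destruct Hx as [L HL].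
  assert (HL0 : 0 <= L).
  { eapply Rle_trans; [|apply (incr_le_lim _ L (l2_incr x) HL 0)].
    rewrite l2_partial_sZ. apply sZ_nonneg; intros; apply pow2_ge_0. }
  pose proof (fun N => key_bound c g e K B h tau th x L N Hh Hh1 Ht HK Hb Hd HL Hpos) as KB.
  fold A in KB.
  assert (Hex : ex_finite_lim_seq (l2_partial (Tapply c g e h tau th x))).
  { apply (ex_finite_lim_seq_incr _ ((1 + tau * A) * L)); [apply l2_incr|exact KB]. }
  split; [exact Hex|].
  destruct Hex as [L' HL'].
  unfold l2norm. rewrite (is_lim_seq_unique _ _ HL'), (is_lim_seq_unique _ _ HL). simpl.
  assert (HLL : L' <= (1 + tau * A) * L).
  { assert (Rbar_le L' ((1 + tau * A) * L)).
    { apply (is_lim_seq_le (l2_partial (Tapply c g e h tau th x)) (fun _ => (1 + tau * A) * L)); auto.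
      apply is_lim_seq_const. }
    exact H. }
  eapply Rle_trans; [apply sqrt_le_1_alt; exact HLL|].
  rewrite sqrt_mult by assumption.
  apply Rmult_le_compat_r; [apply sqrt_pos|].
  assert (Eexp : exp (tau * A) = exp (A / 2 * tau) ^ 2).
  { simpl. rewrite Rmult_1_r, <- exp_plus. f_equal. field. }
  eapply Rle_trans; [apply sqrt_le_1_alt; apply exp_ineq1_le|].
  rewrite Eexp, sqrt_pow2; [lra|left; apply exp_pos].
Qed.
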